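(* Let $G$ be a Lie group, $\mathfrak s\subset\mathfrak g$ a vector subspace, $\varphi:G\to GL(N,\mathbb R)$ a Lie group homomorphism, let $G$ act on $\mathbb R^N\setminus\{0\}$ by $g\cdot x=\varphi(g)x$, and let $\nabla$ be the standard flat affine connection on $\mathbb R^N\setminus\{0\}$. Then for both signs, \[\rho^{\pm}_{G,\mathfrak s}(\mathbb R^N\setminus\{0\},\varphi,\nabla)\le\rho_{G,\mathfrak s}(\mathbb R^N\setminus\{0\},\varphi).\]
   Context: The standard flat connection: $\nabla_X\big(\sum_k f_k\partial/\partial x_k\big)=\sum_k(Xf_k)\partial/\partial x_k$. For $A\in\mathfrak g$, $X_A(p):=(d\sigma_p)_e(A)$ is the fundamental vector field, $\sigma_p(g)=\sigma(g,p)$; $\nabla X$ is the endomorphism $Y\mapsto\nabla_YX$, and $\nabla^M\mathfrak s:=\{\nabla X_A\mid A\in\mathfrak s\}$. $Cl^+_n:=Cl_n$ is the unital real algebra generated by $e_1,\dots,e_n$ with $e_ie_j+e_je_i=-2\delta_{ij}$, and $Cl^-_n:=Cl_{0,n}$ the one with $e_ie_j+e_je_i=2\delta_{ij}$. $\rho^\epsilon_{G,\mathfrak s}(M,\sigma,\nabla)$ is the largest $n$ for which there is a unital $\mathbb R$-algebra homomorphism $f:Cl^\epsilon_n\to\mathrm{End}_{C^\infty(M)}(\mathfrak X(M))$ with $f(e_i)\in\nabla^M\mathfrak s$ for all $i$. $\rho_{G,\mathfrak s}(M,\sigma)$ is the largest $n$ such that there exist $n$ fundamental vector fields $X_{A_1},\dots,X_{A_n}$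 with $A_i\in\mathfrak s$ that are linearly independent at every point of $M$. *)

(* Defs.v *)
From HB Require Import structures.
From mathcomp Require Import all_boot all_order all_algebra.
From mathcomp Require Import all_classical all_reals all_analysis.

Set Implicit Arguments.
Unset Strict Implicit.
Unset Printing Implicit Defensive.

Import Order.TTheory GRing.Theory Num.Theory.
Import numFieldNormedType.Exports.
Local Open Scope classical_set_scope.
Local Open Scope ring_scope.

Definition is_lie_bracket (R : realType) (g : vectType R) (br : g -> g -> g) :=
  [/\ forall a x y z, br (a *: x + y) z = a *: br x z + br y z,
      forall a x y z, br z (a *: x + y) = a *: br z x + br z y,
      forall x, br x x = 0
    & forall x y z, br x (br y z) + br y (br z x) + br z (br x y) = 0].

(* [dphi] is a Lie algebra homomorphism g -> gl(N,R)
   (it plays the role of the differential (d phi)_e of phi : G -> GL(N,R)). *)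
Definition is_lie_hom (R : realType) (g : vectType R) (br : g -> g -> g)
    (N : nat) (dphi : g -> 'M[R]_N) :=
  (forall a x y, dphi (a *: x + y) = a *: dphi x + dphi y) /\
  (forall x y, dphi (br x y) = dphi x *m dphi y - dphi y *m dphi x).

Definition punctured (R : realType) (N : nat) : set 'cV[R]_N := [set p | p != 0].

Fixpoint iter_partial (R : realType) (N : nat) (l : seq 'I_N)
    (Y : 'cV[R]_N -> 'cV[R]_N) : 'cV[R]_N -> 'cV[R]_N :=
  match l with
  | [::] => Y
  | i :: l' => fun p => 'D_(delta_mx i 0) (iter_partial l' Y) p
  end.

Definition smooth_on (R : realType) (N : nat) (U : set 'cV[R]_N)
    (Y : 'cV[R]_N -> 'cV[R]_N) :=
  forall (l : seq 'I_N) (p : 'cV[R]_N), U p ->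
    {for p, continuous (iter_partial l Y)} /\
    forall i : 'I_N, derivable (iter_partial l Y) p (delta_mx i 0).

(* Smooth vector fields on M = R^N \ {0}: elements of X(M) (two such are equal
   when they agree on M). *)
Definition vector_field (R : realType) (N : nat) (Y : 'cV[R]_N -> 'cV[R]_N) :=
  smooth_on (@punctured R N) Y.

Definition flat_nabla (R : realType) (N : nat) (Y X : 'cV[R]_N -> 'cV[R]_N) :
  'cV[R]_N -> 'cV[R]_N := fun p => 'D_(Y p) X p.

Definition nabla_end (R : realType) (N : nat) (X : 'cV[R]_N -> 'cV[R]_N) :
  ('cV[R]_N -> 'cV[R]_N) -> ('cV[R]_N -> 'cV[R]_N) := fun Y => flat_nabla Y X.

(* fundamental vector field of A for the linear action g.x = phi(g) x:
   X_A(p) = (d sigma_p)_e(A) = (d phi)_e(A) p *)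
Definition fund (R : realType) (g : vectType R) (N : nat) (dphi : g -> 'M[R]_N)
    (A : g) : 'cV[R]_N -> 'cV[R]_N := fun p => dphi A *m p.

(* sign: Cl^+_n has e_i e_j + e_j e_i = -2 delta_ij, Cl^-_n has +2 delta_ij;
   eps = true encodes "+", eps = false encodes "-". *)
Definition cl_sign (R : realType) (eps : bool) : R := if eps then -1 else 1.

(* There is a unital R-algebra homomorphism f : Cl^eps_n -> End_{C^oo(M)}(X(M))
   with f(e_i) in nabla^M s.  By the presentation of Cl^eps_n by generators e_i
   and relations, this means: there are A_1..A_n in s such that the endomorphisms
   E_i = nabla X_{A_i} satisfy E_i E_j + E_j E_i = -/+ 2 delta_ij id on X(M). *)
Definition clifford_rep_in (R : realType) (g : vectType R) (N : nat)
    (dphi : g -> 'M[R]_N) (s : {vspace g}) (eps : bool) (n : nat) :=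
  exists A : 'I_n -> g, (forall i, A i \in s) /\
    forall (i j : 'I_n) (Y : 'cV[R]_N -> 'cV[R]_N), vector_field Y ->
      forall p : 'cV[R]_N, p != 0 ->
        nabla_end (fund dphi (A i)) (nabla_end (fund dphi (A j)) Y) p
        + nabla_end (fund dphi (A j)) (nabla_end (fund dphi (A i)) Y) p
        = (2 * @cl_sign R eps * (i == j)%:R) *: Y p.

Definition indep_fund_fields (R : realType) (g : vectType R) (N : nat)
    (dphi : g -> 'M[R]_N) (s : {vspace g}) (n : nat) :=
  exists A : 'I_n -> g, (forall i, A i \in s) /\
    forall p : 'cV[R]_N, p != 0 ->
      forall c : 'I_n -> R, \sum_(i < n) c i *: fund dphi (A i) p = 0 ->
        forall i, c i = 0.

(* Main.v *)
Require Import Defs.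
From HB Require Import structures.
From mathcomp Require Import all_boot all_order all_algebra.
From mathcomp Require Import all_classical all_reals all_analysis.
From mathcomp Require Import lra.

Set Implicit Arguments.
Unset Strict Implicit.
Unset Printing Implicit Defensive.
Import Order.TTheory GRing.Theory Num.Theory.
Import numFieldNormedType.Exports.
Local Open Scope classical_set_scope.
Local Open Scope ring_scope.

Lemma D_lin (R : realType) (N : nat) (M : 'M[R]_N) (p v : 'cV[R]_N) :
  'D_v (mulmx M) p = M *m v.
Proof.
rewrite /derive; apply: cvg_lim => //.
apply: (@cvg_trans _ (cst (M *m v) @ 0^')); last exact: cvg_cst.
apply: near_eq_cvg; near=> h.
rewrite /= mulmxDr addrK -scalemxAr scalerA mulVf ?scale1r //.
near: h; exact: nbhs_dnbhs_neq.
Unshelve. all: by end_near.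
Qed.

Lemma iter_partial_cst (R : realType) (N : nat) (w : 'cV[R]_N) l :
  exists c, iter_partial l (cst w) = cst c.
Proof.
elim: l => [|i l [c IH]] /=; first by exists w.
exists 0; rewrite IH; apply/funext => q; exact: derive_cst.
Qed.

Lemma vf_cst (R : realType) (N : nat) (w : 'cV[R]_N) : vector_field (cst w).
Proof.
move=> l p _; have [c ->] := iter_partial_cst w l; split.
  exact: cst_continuous.
move=> i; exact: derivable_cst.
Qed.

Theorem corollary4p7 (R : realType) (g : vectType R) (br : g -> g -> g)
    (s : {vspace g}) (N : nat) (dphi : g -> 'M[R]_N) :
  is_lie_bracket br -> is_lie_hom br dphi ->
  forall (eps : bool) (n : nat),
    clifford_rep_in dphi s eps n -> indep_fund_fields dphi s n.
Proof.
move=> _ _ eps n [A [As H]]; exists A; split => // p p0 c hc.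
set M := fun i => dphi (A i).
have key : forall i j, M i *m (M j *m p) + M j *m (M i *m p)
    = (2 * cl_sign R eps * (i == j)%:R) *: p.
  move=> i j; rewrite -[RHS](H i j (cst p) (vf_cst p) p p0).
  by rewrite /nabla_end /flat_nabla /fund /= !D_lin.
pose F i j := (c i * c j) *: (M i *m (M j *m p)).
have h1 : forall i, \sum_j F i j = 0.
  move=> i; rewrite /F.
  under eq_bigr => j _ do rewrite -scalerA scalemxAr.
  rewrite -scaler_sumr -mulmx_sumr.
  have -> : \sum_j c j *: (M j *m p) = 0 by exact: hc.
  by rewrite mulmx0 scaler0.
have T0 : \sum_i \sum_j F i j = 0 by rewrite big1.
have T1 : \sum_i \sum_j F j i = 0 by rewrite exchange_big.
have : \sum_i \sum_j (F i j + F j i) = 0.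
  under eq_bigr => i _ do rewrite big_split.
  by rewrite big_split /= T0 T1 addr0.
under eq_bigr => i _ do under eq_bigr => j _ do
  rewrite /F [c j * c i]mulrC -scalerDr key scalerA.
have E : forall i, \sum_j (c i * c j * (2 * cl_sign R eps * (i == j)%:R)) *: p
   = (c i * c i * (2 * cl_sign R eps)) *: p.
  move=> i; rewrite (bigD1 i) //= eqxx mulr1 big1 ?addr0 // => j; rewrite eq_sym => /negbTE ->.
  by rewrite mulr0 mulr0 scale0r.
under eq_bigr => i _ do rewrite E.
rewrite -scaler_suml => /eqP; rewrite scaler_eq0 (negbTE p0) orbF.
rewrite -mulr_suml mulf_eq0 => /orP [/eqP hs|]; last first.
  by rewrite /cl_sign; case: (eps) => /eqP; lra.
move=> i; have /(_ i isT) := psumr_eq0P (fun j _ => (sqr_ge0 (c j) : 0 <= c j * c j)) hs.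
by move/eqP; rewrite mulf_eq0 orbb => /eqP.
Qed.
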